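(* Let $\nu\ge1$, $\Psi\neq\emptyset$, $n\in\mathbb N$, and let $W_1,\dots,W_n:\Omega\to\ell^\infty(\Psi)$ be arbitrary (not necessarily measurable) maps on a probability space $(\Omega,\Upsilon,P)$. For $1\le i\le j\le n$ and $\psi\in\Psi$ let $S^W_{i,j}(\psi)=\sum_{k=i}^jW_k(\psi)$ and $M^W_{i,j}(\psi)=\max_{k=i,\dots,j}|S^W_{i,k}(\psi)|$. Suppose there exist $\alpha>1$ and $g:\{1,\dots,n\}^2\to\mathbb R$ such that $\mathrm E^*\{\sup_{\psi\in\Psi}|S^W_{i,j}(\psi)|^\nu\}\le g^\alpha(i,j)$ for all $1\le i\le j\le n$, and (i') $g(i,j)\ge0$ for all $(i,j)\in\{1,\dots,n\}^2$; (ii') $g(i,j)\le g(i,j+1)$ for all $1\le i\le j\le n-1$; (iii') $g(i,j)+g(j+1,k)\le Q\,g(i,k)$ for all $1\le i\le j<k\le n$, for some $Q\in[1,2^{(\alpha-1)/\alpha})$. Then there exists a constant $A$ depending only on $\alpha,\nu,Q$ such that $$\mathrm E^*\Big\{\sup_{\psi\in\Psi}|M^W_{1,n}(\psi)|^\nu\Big\}\le A\,g^\alpha(1,n);$$ one may take $A=\big(1-Q^{\alpha/\nu}/2^{(\alpha-1)/\nu}\big)^{-\nu}$.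
   Context: $\ell^\infty(\Psi)$ is the space of bounded real functions on $\Psi$. $\mathrm E^*$ denotes outer expectation: $\mathrm E^*\{Y\}=\inf\{\mathrm E\{U\}:U\ge Y,\ U:\Omega\to[-\infty,\infty]\text{ measurable},\ \mathrm E\{U\}\text{ exists}\}$. *)

(* Defs.v *)
From HB Require Import structures.
From mathcomp Require Import all_boot all_order all_algebra.
From mathcomp Require Import all_classical all_reals all_analysis.
From mathcomp Require Import measurable_realfun lebesgue_integral probability.
Set Implicit Arguments. Unset Strict Implicit. Unset Printing Implicit Defensive.
Import Order.TTheory GRing.Theory Num.Theory.
Local Open Scope classical_set_scope.
Local Open Scope ring_scope.

Definition outer_expectation d (T : measurableType d) (R : realType)
  (P : probability T R) (Y : T -> \bar R) : \bar R :=
  ereal_inf [set (\int[P]_x U x)%E | U in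
    [set U : T -> \bar R | [/\ measurable_fun setT U,
       (forall x, (Y x <= U x)%E) &
       ((\int[P]_x (U^\+ x) < +oo)%E \/ (\int[P]_x (U^\- x) < +oo)%E)]]].

Definition partial_sum (R : realType) (T Psi : Type) (W : nat -> T -> Psi -> R)
  (i j : nat) (w : T) (psi : Psi) : R :=
  \sum_(i <= k < j.+1) W k w psi.

Definition max_partial_sum (R : realType) (T Psi : Type) (W : nat -> T -> Psi -> R)
  (i j : nat) (w : T) (psi : Psi) : R :=
  \big[Num.max/0]_(i <= k < j.+1) `|partial_sum W i k w psi|.

(* Main.v *)
Require Import Defs.
From HB Require Import structures.
From mathcomp Require Import all_boot all_order all_algebra.
From mathcomp Require Import all_classical all_reals all_analysis.
From mathcomp Require Import measurable_realfun lebesgue_integral probability.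
From mathcomp Require Import ring lra zify.
Import Order.TTheory GRing.Theory Num.Theory.
Local Open Scope classical_set_scope.
Local Open Scope ring_scope.
Set Implicit Arguments. Unset Strict Implicit. Unset Printing Implicit Defensive.

Lemma conv_ineq (R : realType) (nu l x y : R) : 1 <= nu -> 0 < l -> l < 1 ->
  0 <= x -> 0 <= y ->
  (x + y) `^ nu <= l `^ (1 - nu) * x `^ nu + (1 - l) `^ (1 - nu) * y `^ nu.
Proof.
move=> nu1 l0 l1 x0 y0.
have l'0 : 0 < 1 - l by rewrite subr_gt0.
have e : x + y = l * (x / l) + (1 - l) * (y / (1 - l)).
  by rewrite [l * _]mulrC [(1 - l) * _]mulrC !divfK ?gt_eqF.
have := (@convex_powR R nu nu1 (Itv01 (ltW l0) (ltW l1)) (x / l) (y / (1 - l))).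
have i1 : x / l \in `[0, +oo[%classic.
  by apply/mem_set; rewrite /= in_itv /= andbT divr_ge0 // ltW.
have i2 : y / (1 - l) \in `[0, +oo[%classic.
  by apply/mem_set; rewrite /= in_itv /= andbT divr_ge0 // ltW.
move=> /(_ i1 i2) H; rewrite convRE [X in X `^ _ <= _]convRE in H.
rewrite e; apply: le_trans H _.
have h (a b : R) : 0 < a -> 0 <= b -> a * (b / a) `^ nu = a `^ (1 - nu) * b `^ nu.
  move=> a0 b0; rewrite powRM ?invr_ge0 ?(ltW a0) // -powR_inv1 ?(ltW a0) // -powRrM.
  rewrite mulrCA mulrC; congr (_ * _).
  rewrite -{1}(powRr1 (ltW a0)) -powRD; last by apply/implyP => _; rewrite gt_eqF.
  by rewrite mulN1r.
by rewrite /= h // h.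
Qed.

Section Max.
Context (R : realType).
Implicit Types (F : nat -> R).

Lemma bigmax_ge F i n k : (i <= k < n)%N ->
  F k <= \big[Num.max/0]_(i <= l < n) F l.
Proof.
move: {2}(n - i)%N (erefl (n - i)%N) => dd.
elim: dd i => [|dd IH] i hd hk; first by lia.
rewrite big_ltn; last by lia.
rewrite le_max.
have [ki|ki] := eqVneq k i; first by rewrite ki lexx.
by rewrite IH ?orbT //; lia.
Qed.

Lemma bigmax_ge0 F i n : (forall k, 0 <= F k) ->
  0 <= \big[Num.max/0]_(i <= l < n) F l.
Proof.
move=> F0; apply: (big_ind (fun x => 0 <= x)) => // x y x0 y0.
by rewrite le_max x0.
Qed.

Lemma bigmax_powR_le F i n (X nu : R) : 0 < nu -> 0 <= X ->
  (forall k, (i <= k < n)%N -> F k `^ nu <= X) ->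
  (\big[Num.max/0]_(i <= k < n) F k) `^ nu <= X.
Proof.
move=> nu0 X0 hF; rewrite big_nat_cond; apply: (big_ind (fun x => x `^ nu <= X)).
- by rewrite powR0 // gt_eqF.
- by move=> x y hx hy; rewrite maxEle; case: ifP.
- by move=> k; rewrite andbT => hk; apply: hF.
Qed.

End Max.

Lemma powR_le (R : realType) (nu x y : R) : 0 <= nu -> 0 <= x -> x <= y -> x `^ nu <= y `^ nu.
Proof.
move=> nu0 x0 xy; apply: (ge0_ler_powR nu0) => //; rewrite nnegrE //.
exact: le_trans xy.
Qed.

Lemma pointwise (R : realType) (T Psi : Type) (W : nat -> T -> Psi -> R) w psi
  (i j m : nat) (nu l : R) :
  (1 <= i)%N -> (i <= m)%N -> (m <= j)%N -> 1 <= nu -> 0 < l -> l < 1 ->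
  `|max_partial_sum W i j w psi| `^ nu <=
   l `^ (1 - nu) * `|partial_sum W i m w psi| `^ nu +
   (1 - l) `^ (1 - nu) * (`|max_partial_sum W i m.-1 w psi| `^ nu +
                         `|max_partial_sum W m.+1 j w psi| `^ nu).
Proof.
move=> i1 im mj nu1 l0 l1.
have nu0 : 0 < nu by lra.
set a := l `^ (1 - nu); set b := (1 - l) `^ (1 - nu).
set S := `|partial_sum W i m w psi|.
set M1 := `|max_partial_sum W i m.-1 w psi|.
set M2 := `|max_partial_sum W m.+1 j w psi|.
have b1 : 1 <= b.
  rewrite /b -[X in X <= _](powRr0 (1 - l)).
  have hl : 0 < 1 - l <= 1 by apply/andP; split; lra.
  by apply: (ger_powR hl); lra.
have a0 : 0 <= a by apply: powR_ge0.
have S0 : 0 <= S `^ nu by apply: powR_ge0.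
have M10 : 0 <= M1 `^ nu by apply: powR_ge0.
have M20 : 0 <= M2 `^ nu by apply: powR_ge0.
have aS0 : 0 <= a * S `^ nu by rewrite mulr_ge0.
have bM1 : 0 <= (b - 1) * M1 `^ nu by rewrite mulr_ge0 // subr_ge0.
have bM2 : 0 <= b * M2 `^ nu by rewrite mulr_ge0 //; lra.
have bM1' : 0 <= b * M1 `^ nu by rewrite mulr_ge0 //; lra.
have mp0 p q : 0 <= max_partial_sum W p q w psi.
  by apply: bigmax_ge0 => k; exact: normr_ge0.
rewrite ger0_norm //; apply: bigmax_powR_le => //; first by lra.
move=> k /andP[ik kj].
have [km|mk] := ltnP k m.
  have h : `|partial_sum W i k w psi| <= M1.
    rewrite /M1 [X in _ <= X]ger0_norm // /max_partial_sum prednK; last exact: leq_trans i1 im.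
    by apply: (bigmax_ge (fun k => `|partial_sum W i k w psi|)); rewrite ik km.
  apply: le_trans (powR_le (ltW nu0) (normr_ge0 _) h) _.
  rewrite mulrDr; move: aS0 bM1 bM2; clear; lra.
have e : partial_sum W i k w psi = partial_sum W i m w psi + partial_sum W m.+1 k w psi.
  rewrite /partial_sum (big_cat_nat (n := m.+1)) //.
  by apply: leq_trans im _.
have h2 : `|partial_sum W m.+1 k w psi| <= M2.
  have [km|km] := eqVneq k m.
    by rewrite km /partial_sum big_geq // normr0 normr_ge0.
  rewrite /M2 [X in _ <= X]ger0_norm // /max_partial_sum.
  apply: (bigmax_ge (fun k => `|partial_sum W m.+1 k w psi|)).
  by rewrite kj andbT ltn_neqAle eq_sym km mk.
have h3 : `|partial_sum W i k w psi| <= S + M2.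
  by rewrite e; apply: le_trans (ler_normD _ _) _; rewrite lerD2l.
have := powR_le (ltW nu0) (normr_ge0 _) h3.
have := conv_ineq nu1 l0 l1 (normr_ge0 (partial_sum W i m w psi)) (normr_ge0 (max_partial_sum W m.+1 j w psi)).
rewrite -/S -/M2 -/a -/b; move: bM1'; clear; lra.
Qed.

Section OE.
Context d (T : measurableType d) (R : realType) (P : probability T R).
Local Open Scope ereal_scope.

Lemma oe_le_int (Y U : T -> \bar R) : measurable_fun setT U ->
  (forall x, Y x <= U x) -> (forall x, 0 <= U x) ->
  outer_expectation P Y <= \int[P]_x U x.
Proof.
move=> mU YU U0; apply: ereal_inf_lbound; exists U => //; split => //; right.
rewrite (eq_integral (cst 0)); first by rewrite integral0 ltry.
by apply: ge0_funenegE => x _; exact: U0.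
Qed.

Lemma oe_approx (Y : T -> \bar R) (r e : R) : (forall x, 0 <= Y x) ->
  outer_expectation P Y <= r%:E -> (0 < e)%R ->
  exists U : T -> \bar R, [/\ measurable_fun setT U, (forall x, Y x <= U x),
    (forall x, 0 <= U x) & \int[P]_x U x <= (r + e)%:E].
Proof.
move=> Y0 Yr e0.
have : outer_expectation P Y < (r + e)%:E.
  by apply: (le_lt_trans Yr); rewrite lte_fin ltrDl.
move/ereal_inf_lt => [_ [U [mU YU _] <-] lt].
exists U; split => // [x|]; first exact: le_trans (Y0 x) (YU x).
exact: ltW.
Qed.

Lemma oe_comb (Z Y1 Y2 : T -> \bar R) (a b r1 r2 : R) : (0 < a)%R -> (0 < b)%R ->
  (forall x, 0 <= Y1 x) -> (forall x, 0 <= Y2 x) ->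
  (forall x, Z x <= a%:E * Y1 x + b%:E * Y2 x) ->
  outer_expectation P Y1 <= r1%:E -> outer_expectation P Y2 <= r2%:E ->
  outer_expectation P Z <= (a * r1 + b * r2)%:E.
Proof.
move=> a0 b0 Y10 Y20 ZY h1 h2; apply/lee_addgt0Pr => e e0.
have ab0 : (0 < a + b)%R by rewrite addr_gt0.
have e'0 : (0 < e / (a + b))%R by rewrite divr_gt0.
have [U1 [mU1 YU1 U10 iU1]] := oe_approx Y10 h1 e'0.
have [U2 [mU2 YU2 U20 iU2]] := oe_approx Y20 h2 e'0.
have mA : measurable_fun setT (fun x => a%:E * U1 x) by exact: measurable_funeM.
have mB : measurable_fun setT (fun x => b%:E * U2 x) by exact: measurable_funeM.
apply: le_trans (oe_le_int (U := fun x => a%:E * U1 x + b%:E * U2 x) _ _ _) _.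
- exact: emeasurable_funD.
- move=> x; apply: (le_trans (ZY x)); apply: leeD; apply: lee_wpmul2l => //;
    rewrite lee_fin ltW //.
- by move=> x; rewrite adde_ge0 // mule_ge0 // lee_fin ltW.
rewrite ge0_integralD //; last 2 first.
- by move=> x _; rewrite mule_ge0 // lee_fin ltW.
- by move=> x _; rewrite mule_ge0 // lee_fin ltW.
rewrite !ge0_integralZl //; try by rewrite lee_fin ltW.
have a0' : 0 <= a%:E by rewrite lee_fin ltW.
have b0' : 0 <= b%:E by rewrite lee_fin ltW.
apply: le_trans (leeD (lee_wpmul2l a0' iU1) (lee_wpmul2l b0' iU2)) _.
rewrite -!EFinM -!EFinD lee_fin le_eqVlt; apply/orP; left; apply/eqP.
by field; rewrite gt_eqF.
Qed.

End OE.

Lemma Ylift (R : realType) (Psi : Type) (f s m1 m2 : Psi -> R) (a b : R) :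
  0 <= a -> 0 <= b ->
  (forall psi, f psi <= a * s psi + b * (m1 psi + m2 psi)) ->
  (ereal_sup [set (f psi)%:E | psi in [set: Psi]] <=
   a%:E * ereal_sup [set (s psi)%:E | psi in [set: Psi]] +
   b%:E * (ereal_sup [set (m1 psi)%:E | psi in [set: Psi]] +
           ereal_sup [set (m2 psi)%:E | psi in [set: Psi]]))%E.
Proof.
move=> a0 b0 H; apply: ge_ereal_sup => _ [psi _ <-].
apply: (@le_trans _ _ (a%:E * (s psi)%:E + b%:E * ((m1 psi)%:E + (m2 psi)%:E))%E).
  by rewrite -EFinD lee_fin.
apply: leeD; apply: lee_wpmul2l; rewrite ?lee_fin //.
  by apply: ereal_sup_ubound; exists psi.
by apply: leeD; apply: ereal_sup_ubound; exists psi.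
Qed.

Lemma split_exists (R : realType) (g : nat -> nat -> R) (i j : nat) (Q G : R) :
  (i <= j)%N ->
  (forall m, (i <= m)%N -> (m < j)%N -> g i m + g m.+1 j <= Q * G) ->
  exists m, [/\ (i <= m)%N, (m <= j)%N,
    ((i < m)%N -> g i m.-1 <= Q * G / 2) & ((m < j)%N -> g m.+1 j <= Q * G / 2)].
Proof.
move=> ij H; set c := Q * G / 2.
have [ex|nex] := pselect (exists m, (i <= m <= j)%N && (c < g i m)).
  case: (ex_minnP ex) => m /andP[/andP[im mj] cm] minm.
  exists m; split => // [hm|hm].
    rewrite leNgt; apply/negP => h.
    have := minm m.-1; rewrite h andbT.
    have -> : (i <= m.-1 <= j)%N by apply/andP; split; lia.
    by move=> /(_ isT); lia.
  have := H m im hm; rewrite -/c. 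
  have e : Q * G = c + c by rewrite /c; field.
  rewrite e; lra.
exists j; split => // [hm|]; last by rewrite ltnn.
rewrite leNgt; apply/negP => h; apply: nex; exists j.-1.
by rewrite h andbT; apply/andP; split; lia.
Qed.

Unset Implicit Arguments. Set Strict Implicit.

Lemma powRV' (R : realType) (x r : R) : 0 <= x -> (x^-1) `^ r = (x `^ r)^-1.
Proof. by move=> x0; rewrite -powR_inv1 // -powRrM mulN1r powRN. Qed.

Lemma arith (R : realType) (Q alpha nu G : R) : 1 < alpha -> 1 <= nu -> 1 <= Q ->
  Q < 2 `^ ((alpha - 1) / alpha) -> 0 <= G ->
  let kap := Q `^ (alpha / nu) / 2 `^ ((alpha - 1) / nu) in
  let A := (1 - kap) `^ (- nu) in
  [/\ 0 < kap, kap < 1 &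
  (1 - kap) `^ (1 - nu) * G `^ alpha +
   (1 - (1 - kap)) `^ (1 - nu) * (1 * (A * (Q * G / 2) `^ alpha) + 1 * (A * (Q * G / 2) `^ alpha))
  <= A * G `^ alpha].
Proof.
move=> a1 nu1 Q1 Q2 G0 kap A.
have nu0 : 0 < nu by lra.
have al0 : 0 < alpha by lra.
have kap0 : 0 < kap by rewrite divr_gt0 // powR_gt0 //; lra.
have kap1 : kap < 1.
  rewrite /kap ltr_pdivrMr ?powR_gt0 // mul1r.
  have -> : 2 `^ ((alpha - 1) / nu) = (2 `^ ((alpha - 1) / alpha)) `^ (alpha / nu).
    by rewrite -powRrM; congr (_ `^ _); field; rewrite !gt_eqF.
  apply: (gt0_ltr_powR (divr_gt0 al0 nu0)) => //; rewrite nnegrE ?powR_ge0 //; lra.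
split => //.
have -> : 1 - (1 - kap) = kap by ring.
have l0 : 0 < 1 - kap by lra.
have F3 : (1 - kap) `^ (1 - nu) = (1 - kap) * A.
  rewrite /A -[X in X * _](powRr1 (ltW l0)) -powRD; last by apply/implyP => _; rewrite gt_eqF.
  by congr (_ `^ _); ring.
have F1 : kap `^ nu = 2 * Q `^ alpha / 2 `^ alpha.
  rewrite /kap powRM ?powR_ge0 ?invr_ge0 //.
  rewrite -powRrM divfK ?gt_eqF // powRV' ?powR_ge0 // -powRrM divfK ?gt_eqF //.
  rewrite powRD; last by rewrite pnatr_eq0 implybT.
  rewrite powR_inv1 // invfM invrK; ring.
have F2 : (Q * G / 2) `^ alpha = Q `^ alpha * G `^ alpha / 2 `^ alpha.
  rewrite !powRM ?mulr_ge0 ?invr_ge0 //; try lra.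
  by rewrite powRV'.
have F4 : kap `^ (1 - nu) * kap `^ nu = kap.
  rewrite -powRD; last by apply/implyP => _; rewrite gt_eqF.
  by rewrite subrK powRr1 // ltW.
rewrite F3 F2.
have -> : kap `^ (1 - nu) * (1 * (A * (Q `^ alpha * G `^ alpha / 2 `^ alpha)) +
   1 * (A * (Q `^ alpha * G `^ alpha / 2 `^ alpha))) =
   A * G `^ alpha * (kap `^ (1 - nu) * (2 * Q `^ alpha / 2 `^ alpha)) by ring.
rewrite -F1 F4.
have -> : (1 - kap) * A * G `^ alpha + A * G `^ alpha * kap = A * G `^ alpha by ring.
exact: lexx.
Qed.

Ltac keepT T := match T with
  | is_true (leq _ _) => idtac | is_true (_ && _) => idtac
  | is_true (~~ (?a == _)) => let t := type of a in match t with nat => idtac end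
  | is_true (?a == _) => let t := type of a in match t with nat => idtac end
  | (@eq nat _ _) => idtac | nat => idtac end.
Ltac nlia := repeat match goal with H : ?T |- _ =>
  tryif keepT T then fail else clear H end; lia.

Theorem proposition7p3 (d : measure_display) (T : measurableType d) (R : realType)
  (P : probability T R) (Psi : Type) (nu : R) (n : nat)
  (W : nat -> T -> Psi -> R) (alpha Q : R) (g : nat -> nat -> R) :
  1 <= nu ->
  (exists psi0 : Psi, True) ->
  (1 <= n)%N ->
  (* each W_k(omega) is an element of l^oo(Psi) *)
  (forall k w, (1 <= k <= n)%N -> exists B : R, forall psi, `|W k w psi| <= B) ->
  1 < alpha ->
  (forall i j, (1 <= i)%N -> (i <= j)%N -> (j <= n)%N ->
     (outer_expectation P (fun w =>
        ereal_sup [set ((`|partial_sum W i j w psi|) `^ nu)%:E | psi in [set: Psi]])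
      <= ((g i j) `^ alpha)%:E)%E) ->
  (forall i j, (1 <= i <= n)%N -> (1 <= j <= n)%N -> 0 <= g i j) ->
  (forall i j, (1 <= i)%N -> (i <= j)%N -> (j <= n - 1)%N -> g i j <= g i j.+1) ->
  (forall i j k, (1 <= i)%N -> (i <= j)%N -> (j < k)%N -> (k <= n)%N ->
     g i j + g j.+1 k <= Q * g i k) ->
  1 <= Q -> Q < 2 `^ ((alpha - 1) / alpha) ->
  (outer_expectation P (fun w =>
      ereal_sup [set ((`|max_partial_sum W 1 n w psi|) `^ nu)%:E | psi in [set: Psi]])
   <= (((1 - Q `^ (alpha / nu) / 2 `^ ((alpha - 1) / nu)) `^ (- nu))
        * (g 1%N n) `^ alpha)%:E)%E.
Proof.
move=> nu1 [psi0 _] n1 _ a1 hE g0 gmono gsub Q1 Q2.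
have nu0 : 0 < nu by lra.
have al0 : 0 < alpha by lra.
have [kap0 kap1 _] := @arith R Q alpha nu 0 a1 nu1 Q1 Q2 (lexx 0).
set kap := Q `^ (alpha / nu) / 2 `^ ((alpha - 1) / nu) in kap0 kap1 *.
set A := (1 - kap) `^ (- nu).
have A0 : 0 <= A by apply: powR_ge0.
pose Ys i j := fun w =>
  ereal_sup [set ((`|partial_sum W i j w psi|) `^ nu)%:E | psi in [set: Psi]].
pose Ym i j := fun w =>
  ereal_sup [set ((`|max_partial_sum W i j w psi|) `^ nu)%:E | psi in [set: Psi]].
have Ys0 i j w : (0 <= Ys i j w)%E.
  apply: (@le_trans _ _ ((`|partial_sum W i j w psi0| `^ nu)%:E)).
    by rewrite lee_fin powR_ge0.
  by apply: ereal_sup_ubound; exists psi0.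
have Ym0 i j w : (0 <= Ym i j w)%E.
  apply: (@le_trans _ _ ((`|max_partial_sum W i j w psi0| `^ nu)%:E)).
    by rewrite lee_fin powR_ge0.
  by apply: ereal_sup_ubound; exists psi0.
have empty i j : (j < i)%N -> (outer_expectation P (Ym i j) <= 0%:E)%E.
  move=> ji; have := @oe_le_int _ _ _ P (Ym i j) (cst 0%E).
  rewrite integral0; apply.
  - exact: measurable_cst.
  - move=> w; apply: ge_ereal_sup => _ [psi _ <-].
    by rewrite /max_partial_sum big_geq // normr0 powR0 ?gt_eqF.
  - by [].
have gmon i m j : (1 <= i)%N -> (i <= m)%N -> (m <= j)%N -> (j <= n)%N -> g i m <= g i j.
  move=> i1 im; elim: j => [|j IH] mj jn.
    by have -> : m = 0%N by nlia.
  have [->|mj'] := eqVneq m j.+1; first exact: lexx.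
  apply: le_trans (IH _ _) (gmono i j _ _ _); nlia.
have main dd : forall i j, (j - i < dd)%N -> (1 <= i)%N -> (i <= j)%N -> (j <= n)%N ->
    (outer_expectation P (Ym i j) <= (A * g i j `^ alpha)%:E)%E.
  elim: dd => [|dd IH] i j hd i1 ij jn; first by nlia.
  have G0 : 0 <= g i j by apply: g0; nlia.
  have [_ _ ar] := @arith R Q alpha nu (g i j) a1 nu1 Q1 Q2 G0.
  have c0 : 0 <= Q * g i j / 2 by rewrite divr_ge0 // mulr_ge0 //; lra.
  have [m [im mj h1 h2]] := split_exists ij (fun m im mj => gsub i m j i1 im mj jn).
  have B1 : (outer_expectation P (Ym i m.-1) <= (A * (Q * g i j / 2) `^ alpha)%:E)%E.
    have [im'|im'] := ltnP i m.
      apply: le_trans (IH i m.-1 _ i1 _ _) _; try nlia.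
      rewrite lee_fin ler_wpM2l // powR_le //; [lra | apply: g0; nlia | exact: h1].
    apply: le_trans (empty _ _ _) _; first nlia.
    by rewrite lee_fin mulr_ge0 // powR_ge0.
  have B2 : (outer_expectation P (Ym m.+1 j) <= (A * (Q * g i j / 2) `^ alpha)%:E)%E.
    have [mj'|mj'] := ltnP m j.
      apply: le_trans (IH m.+1 j _ _ _ _) _; try nlia.
      rewrite lee_fin ler_wpM2l // powR_le //; [lra | apply: g0; nlia | exact: h2].
    apply: le_trans (empty _ _ _) _; first nlia.
    by rewrite lee_fin mulr_ge0 // powR_ge0.
  have B3 : (outer_expectation P (Ys i m) <= (g i j `^ alpha)%:E)%E.
    apply: le_trans (hE i m i1 im _) _; first nlia.
    rewrite lee_fin powR_le //; [lra | apply: g0; nlia | apply: gmon; nlia].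
  have B12 : (outer_expectation P (fun w => Ym i m.-1 w + Ym m.+1 j w)%E <=
     (1 * (A * (Q * g i j / 2) `^ alpha) + 1 * (A * (Q * g i j / 2) `^ alpha))%:E)%E.
    refine (@oe_comb _ _ _ P (fun w => Ym i m.-1 w + Ym m.+1 j w)%E (Ym i m.-1) (Ym m.+1 j) 1 1 _ _ ltr01 ltr01 (Ym0 i m.-1) (Ym0 m.+1 j) _ B1 B2).
    by move=> w; rewrite !mul1e.
  have l0 : 0 < 1 - kap by lra.
  have l1 : 1 - kap < 1 by lra.
  have a0 : 0 < (1 - kap) `^ (1 - nu) by apply: powR_gt0.
  have b0 : 0 < (1 - (1 - kap)) `^ (1 - nu) by apply: powR_gt0; lra.
  rewrite -lee_fin in ar; apply: le_trans _ ar.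
  refine (@oe_comb _ _ _ P (Ym i j) (Ys i m) (fun w => Ym i m.-1 w + Ym m.+1 j w)%E _ _ _ _ a0 b0 (Ys0 i m) (fun w => adde_ge0 (Ym0 _ _ w) (Ym0 _ _ w)) _ B3 B12).
  move=> w; apply: Ylift; rewrite ?ltW //.
  by move=> psi; apply: (pointwise _ _ _ i1 im mj nu1 l0 l1).
have := main n.+1 1%N n _ (leqnn 1) n1 (leqnn n).
by apply; nlia.
Qed.
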